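(* Suppose $\partial\overline{\mathcal{G}}$ is not a set of isolated points, i.e. some point of $\partial\overline{\mathcal{G}}$ is a limit point of $\partial\overline{\mathcal{G}}$. Then there is a continuous function $F:\partial\overline{\mathcal{G}}\to\mathbb{R}$ such that no harmonic function $g$ on $\overline{\mathcal{G}}$ with $g=F$ on $\partial\overline{\mathcal{G}}$ belongs to $\mathbb{H}_1$.
   Context: $\mathcal{G}$ is a connected, locally finite metric graph with countable vertex set and countable edge set. Each edge has a positive length and is identified with an interval. $\mathcal{G}$ carries the geodesic distance $d$, and $\overline{\mathcal{G}}$ is its metric completion. A designated set of vertices, containing all vertices of degree $1$, forms the boundary vertices. $\mathcal{G}_{int}$ is $\mathcal{G}$ minus the boundary vertices, and $\partial\overline{\mathcal{G}}=\overline{\mathcal{G}}\setminus\mathcal{G}_{int}$. Standing assumptions: $\overline{\mathcal{G}}$ is compact and $\partial\overline{\mathcal{G}}$ is totally disconnected. A function $f:\overline{\mathcal{G}}\to\mathbb{R}$ is harmonic if it is continuous, linear on each edge, and satisfies $\sum_{e\sim v}\partial_\nu f_e(v)=0$ at every interior vertex $v$, where $\partial_\nu f_e(v)$ is the derivative of $f_e$ at $v$ in the direction pointing from $v$ into the edge $e$. $\mathbb{H}_1$ is the set of $f:\overline{\mathcal{G}}\to\mathbb{R}$ that are continuous on $\overline{\mathcal{G}}$, absolutely continuous on each edge, and have $f'\in L^2(\mathcal{G})$. *)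

(* Defs.v *)
From HB Require Import structures.
From mathcomp Require Import all_boot all_order all_algebra.
From mathcomp Require Import all_classical all_reals all_analysis.
Set Implicit Arguments. Unset Strict Implicit. Unset Printing Implicit Defensive.
Import Order.TTheory GRing.Theory Num.Theory.
Import numFieldNormedType.Exports.
Local Open Scope classical_set_scope.
Local Open Scope ring_scope.

(* Combinatorial data of a metric graph: countable vertex and edge     *)
(* sets, each edge e is identified with the interval [0, len e], with  *)
(* 0 corresponding to src e and len e to tgt e (loops allowed).        *)
Record mgraph (R : realType) := MGraph {
  vert : countType;
  edge : countType;
  src : edge -> vert;
  tgt : edge -> vert;
  len : edge -> R;
  bnd : set vert
}.

Section MetricGraph.
Variables (R : realType) (G : mgraph R).

Definition incident (v : vert G) : set (edge G) :=
  [set e | src e = v \/ tgt e = v].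

Definition degree_one (v : vert G) : Prop :=
  exists e, [/\ incident v e, src e <> tgt e &
                forall e', incident v e' -> e' = e].

(* walks: sequences of oriented edges (true = traversed src -> tgt) *)
Fixpoint walk (u : vert G) (l : seq (edge G * bool)) (v : vert G) : Prop :=
  match l with
  | [::] => u = v
  | (e, b) :: l' => if b then src e = u /\ walk (tgt e) l' v
                    else tgt e = u /\ walk (src e) l' v
  end.

Definition walk_length (l : seq (edge G * bool)) : R := \sum_(x <- l) len x.1.

Definition well_formed_mgraph : Prop :=
  [/\ (forall e : edge G, 0 < len e),
      (forall v, finite_set (incident v)),
      (forall u v, exists l, walk u l v) &
      (forall v, degree_one v -> bnd v)].

(* points of G: vertices, or interior points (e, t) with 0 < t < len e *)
Definition gpt := (vert G + {p : edge G * R | (0 < p.2 < len p.1)})%type.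

Definition epoint (e : edge G) (t : R) : gpt :=
  match @insub _ (fun p : edge G * R => (0 < p.2 < len p.1)) _ (e, t) with
  | Some p => inr p
  | None => if t <= 0 then inl (src e) else inl (tgt e)
  end.

Definition vdist (u v : vert G) : R :=
  inf [set walk_length l | l in [set l | walk u l v]].

(* the endpoints through which a point can be left, with the distance to them *)
Definition exits (p : gpt) : seq (vert G * R) :=
  match p with
  | inl v => [:: (v, 0)]
  | inr q => [:: (src (sval q).1, (sval q).2);
                 (tgt (sval q).1, len (sval q).1 - (sval q).2)]
  end.

Definition same_edge_dist (p q : gpt) : set R :=
  match p, q with
  | inr a, inr b => [set r | (sval a).1 = (sval b).1 /\
                             r = `|(sval a).2 - (sval b).2|]
  | _, _ => set0
  end.

Definition gdist (p q : gpt) : R :=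
  inf ([set r | exists x y, [/\ x \in exits p, y \in exits q &
                                r = x.2 + vdist x.1 y.1 + y.2]]
       `|` same_edge_dist p q).

Definition Gint : set gpt :=
  fun p => match p with inl v => ~ bnd v | inr _ => True end.

End MetricGraph.

(* Metric completion: a complete metric space X (its uniform structure *)
(* is given by the metric dX) with a dense isometric embedding of G.   *)
Definition is_metric_completion (R : realType) (G : mgraph R)
    (X : completePseudoMetricType R) (dX : X -> X -> R) (iota : gpt G -> X) :=
  [/\
      [/\ (forall x y, dX x y = 0 <-> x = y),
          (forall x y, dX x y = dX y x) &
          (forall x y z, dX x z <= dX x y + dX y z)],
      (forall x (r : R), 0 < r -> ball x r = [set y | dX x y < r]),
      (forall p q, dX (iota p) (iota q) = gdist p q) &
      dense (range iota)].

Definition gbdry (R : realType) (G : mgraph R) (X : completePseudoMetricType R)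
    (iota : gpt G -> X) : set X :=
  ~` (iota @` @Gint R G).

Definition mg_harmonic (R : realType) (G : mgraph R) (X : completePseudoMetricType R)
    (iota : gpt G -> X) (f : X -> R) : Prop :=
  [/\ continuous f,
      (forall e : edge G, exists a b : R, forall t, 0 <= t <= len e ->
           f (iota (epoint e t)) = a * t + b) &
      (* Kirchhoff condition at interior vertices: sum of derivatives in the
         directions pointing from v into the incident edges vanishes; for a
         function linear on e the derivative into e at src e is the slope and
         at tgt e it is minus the slope *)
      (forall v : vert G, ~ bnd v ->
         let slope e := (f (iota (inl (tgt e))) - f (iota (inl (src e)))) / len e in
         (\sum_(e \in [set e | src e = v]) slope e)
         - (\sum_(e \in [set e | tgt e = v]) slope e) = 0)].

Definition abs_cont_on (R : realType) (a b : R) (f : R -> R) : Prop :=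
  forall eps : R, 0 < eps -> exists2 delta : R, 0 < delta &
    forall s : seq (R * R),
      sorted <=%R (a :: rcons (flatten [seq [:: x.1; x.2] | x <- s]) b) ->
      \sum_(x <- s) (x.2 - x.1) < delta ->
      \sum_(x <- s) `|f x.2 - f x.1| < eps.

Definition in_H1 (R : realType) (G : mgraph R) (X : completePseudoMetricType R)
    (iota : gpt G -> X) (f : X -> R) : Prop :=
  [/\ continuous f,
      (forall e : edge G, abs_cont_on 0 (len e) (fun t => f (iota (epoint e t)))) &
      (* f' in L^2(G): the a.e.-defined derivatives on the edges are
         represented by measurable h e, and sum_e int_0^{len e} |h e|^2 < oo *)
      exists h : edge G -> R -> R,
        [/\ (forall e, measurable_fun `[0, len e] (h e)),
            (forall e, {ae (@lebesgue_measure R), forall t, `]0, len e[%classic t ->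
                 is_derive t 1 (fun s => f (iota (epoint e s))) (h e t)}) &
            (\esum_(e in [set: edge G])
               (\int[@lebesgue_measure R]_(t in (`[0%R, len e]%classic : set R)) ((h e t) ^+ 2)%:E)
             < +oo)%E]].

(* Main.v *)
Require Import Defs.
From HB Require Import structures.
From mathcomp Require Import all_boot all_order all_algebra.
From mathcomp Require Import all_classical all_reals all_analysis.
Import Order.TTheory GRing.Theory Num.Theory.
Import numFieldNormedType.Exports.
Local Open Scope classical_set_scope.
Local Open Scope ring_scope.
From mathcomp Require Import ring lra.
Set Implicit Arguments. Unset Strict Implicit.
Section Walks.
Variables (R : realType) (G : mgraph R).
Implicit Types (l : seq (edge G * bool)).

Lemma walk_cat (u v : vert G) l1 l2 :
  walk u (l1 ++ l2) v <-> exists x, walk u l1 x /\ walk x l2 v.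
Proof.
elim: l1 u => [|[e b] l1 IH] u /=.
  by split=> [H|[x [-> H]]] //; exists u.
case: b.
  split=> [[<- /IH [x [H1 H2]]]|[x [[<- H1] H2]]]; first by exists x.
  by split=> //; apply/IH; exists x.
split=> [[<- /IH [x [H1 H2]]]|[x [[<- H1] H2]]]; first by exists x.
by split=> //; apply/IH; exists x.
Qed.

Lemma split_mem (e : edge G) l :
  e \in map fst l -> exists p1 b p2, l = p1 ++ (e, b) :: p2.
Proof.
elim: l => [|[e' b'] l IH] //=; rewrite inE => /orP [/eqP ->|/IH [p1 [b [p2 ->]]]].
  by exists [::], b', l.
by exists ((e', b') :: p1), b, p2.
Qed.

Lemma walk_length_cons (x : edge G * bool) l : walk_length (x :: l) = len x.1 + walk_length l.
Proof. by rewrite /walk_length big_cons. Qed.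

Lemma walk_length_cat l1 l2 : walk_length (l1 ++ l2) = walk_length l1 + walk_length l2.
Proof. by rewrite /walk_length big_cat. Qed.

Hypothesis len_ge0 : forall e : edge G, 0 <= len e.

Lemma walk_length_ge0 l : 0 <= walk_length l.
Proof. by rewrite /walk_length; apply: sumr_ge0 => i _; exact: len_ge0. Qed.

Lemma walk_simple (u v : vert G) l : walk u l v ->
  exists l', [/\ walk u l' v, uniq (map fst l') & walk_length l' <= walk_length l].
Proof.
elim: l u => [|[e b] l IH] u /=.
  by move=> ->; exists [::].
have key : forall w, walk w l v -> (if b then src e = u /\ w = tgt e else tgt e = u /\ w = src e) ->
  exists l', [/\ walk u l' v, uniq (map fst l') & walk_length l' <= walk_length ((e, b) :: l)].
  move=> w Hwl Hb.
  have [l' [Hl' Hu Hle]] := IH _ Hwl.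
  have Hlen : walk_length l' <= walk_length ((e, b) :: l).
    by rewrite walk_length_cons /=; apply: le_trans Hle _; rewrite lerDr len_ge0.
  case Hin: (e \in map fst l'); last first.
    exists ((e, b) :: l'); split => //=; last by rewrite !walk_length_cons lerD2l.
    - by clear Hlen; case: b Hb => -[Hs Hw]; subst w.
    - by rewrite Hin.
  have [p1 [b' [p2 Ep]]] := split_mem Hin.
  move: Hl'; rewrite Ep => /walk_cat [x [_ Hx]].
  have Hu2 : uniq (map fst ((e, b') :: p2)).
    by move: Hu; rewrite Ep map_cat cat_uniq => /and3P [].
  have Hl2 : walk_length ((e, b') :: p2) <= walk_length ((e, b) :: l).
    apply: le_trans Hlen; rewrite Ep walk_length_cat lerDr; exact: walk_length_ge0.
  have Hl3 : walk_length p2 <= walk_length ((e, b) :: l).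
    apply: le_trans Hl2; rewrite walk_length_cons lerDr; exact: len_ge0.
  clear Hlen Hle Ep Hin Hu; move: Hx Hu2 Hl2 Hl3 => /=.
  case: b Hb; case: b' => -[Hs Hw] [Hx Hp2] Hu2 Hl2 Hl3.
  - by exists ((e, true) :: p2); split => //=; rewrite ?Hx ?Hs.
  - by exists p2; split => //; [rewrite -Hs | case/andP: Hu2].
  - by exists p2; split => //; [rewrite -Hs | case/andP: Hu2].
  - by exists ((e, false) :: p2); split => //=; rewrite ?Hx ?Hs.
by move: key; case: b => key -[Hs Hwl]; apply: (key _ Hwl).
Qed.
End Walks.
Lemma lin_derive (R : realType) (a c t : R) : is_derive t 1 (fun s : R => a * s + c) a.
Proof.
have := is_deriveD (is_deriveZ a (is_derive_id t (1:R))) (is_derive_cst c t (1:R)).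
by rewrite addr0 /GRing.scale /= mulr1.
Qed.
Section Lin.
Variables (R : realType) (G : mgraph R) (X : completePseudoMetricType R) (iota : gpt G -> X) (g : X -> R).
Hypothesis Hlen : forall e : edge G, 0 < len e.

Lemma epoint0 (e : edge G) : epoint e 0 = inl (src e).
Proof. by rewrite /epoint insubF ?lexx //= ltxx. Qed.

Lemma epointL (e : edge G) : epoint e (len e) = inl (tgt e).
Proof. by rewrite /epoint insubF /= ?ltxx ?andbF // leNgt Hlen. Qed.

Lemma epointI (e : edge G) t (H : 0 < t < len e) :
  epoint e t = inr (exist _ (e, t) H).
Proof. by rewrite /epoint insubT /=. Qed.

Definition slope (e : edge G) := (g (iota (inl (tgt e))) - g (iota (inl (src e)))) / len e.

Hypothesis Hlin : forall e : edge G, exists a b : R, forall t, 0 <= t <= len e ->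
           g (iota (epoint e t)) = a * t + b.

Lemma lin (e : edge G) t : 0 <= t <= len e ->
  g (iota (epoint e t)) = slope e * t + g (iota (inl (src e))).
Proof.
have [a [b H]] := Hlin e.
have l0 := Hlen e.
have H0 : g (iota (inl (src e))) = b.
  by rewrite -epoint0 H ?mulr0 ?add0r // lexx ltW.
have HL : g (iota (inl (tgt e))) = a * len e + b.
  by rewrite -epointL H // lexx ltW.
move=> Ht; rewrite H // /slope HL H0; congr (_ + _); congr (_ * _).
by rewrite addrK mulfK // gt_eqF.
Qed.

Lemma deriv_eq (e : edge G) t (dt : R) : 0 < t < len e ->
  is_derive t 1 (fun s => g (iota (epoint e s))) dt -> dt = slope e.
Proof.
move=> Ht Hd.
have Hn : \forall s \near t, g (iota (epoint e s)) = slope e * s + g (iota (inl (src e))).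
  have : \forall s \near t, s \in `]0, len e[.
    by apply: near_in_itvoo; rewrite in_itv /= Ht.
  apply: filterS => s; rewrite in_itv /= => /andP [? ?].
  by apply: lin; rewrite !ltW.
have Hd' := near_eq_is_derive Hn Hd.
have E1 := @derive_val _ _ _ _ _ _ _ Hd'.
have E2 := @derive_val _ _ _ _ _ _ _ (@lin_derive R (slope e) (g (iota (inl (src e)))) t).
by rewrite -E1 E2.
Qed.
End Lin.
Section Energy.
Variables (R : realType) (G : mgraph R) (X : completePseudoMetricType R) (iota : gpt G -> X) (g : X -> R).
Hypothesis Hlen : forall e : edge G, 0 < len e.
Hypothesis Hlin : forall e : edge G, exists a b : R, forall t, 0 <= t <= len e ->
           g (iota (epoint e t)) = a * t + b.
Variable h : edge G -> R -> R.
Hypothesis hm : forall e, measurable_fun `[0, len e] (h e).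
Hypothesis hd : forall e, {ae (@lebesgue_measure R), forall t, `]0, len e[%classic t ->
                 is_derive t 1 (fun s => g (iota (epoint e s))) (h e t)}.

Lemma ae_neq (a : R) : {ae (@lebesgue_measure R), forall t : R, t != a}.
Proof.
exists [set a]; split; [exact: measurable_set1 | exact: lebesgue_measure_set1 |].
by move=> t /= /negP /negbNE /eqP ->.
Qed.

Lemma h_int (e : edge G) :
  (\int[@lebesgue_measure R]_(t in (`[0%R, len e]%classic : set R)) ((h e t) ^+ 2)%:E
   = ((slope iota g e) ^+ 2 * len e)%:E)%E.
Proof.
rewrite (ae_eq_integral (fun _ => ((slope iota g e) ^+ 2)%:E)) //.
- rewrite integral_cst //; rewrite [X in (_ * X)%E]lebesgue_measure_itv /= lte_fin Hlen -EFinD oppr0 addr0 -EFinM //.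
- have HH := proj2 (measurable_realfun.measurable_EFinP _ _) (measurable_realfun.measurable_funX 2 (@hm e)).
  exact HH.
- have Fae := ae_filter_ringOfSetsType (@lebesgue_measure R).
  apply: (@filterS3 _ _ Fae _ _ _ _ _ (hd e)) (ae_neq 0) (ae_neq (len e)) => t H1 H2 H3.
  rewrite /= in_itv /= => /andP [t0 tl].
  have Ht : 0 < t < len e.
    by rewrite lt_neqAle eq_sym H2 t0 lt_neqAle H3 tl.
  have Hd := H1 ltac:(by rewrite /= in_itv /= Ht).
  by rewrite /= (deriv_eq (iota:=iota) (g:=g) Hlen Hlin Ht Hd).
Qed.
End Energy.
Section EnergyBound.
Variables (R : realType) (G : mgraph R) (X : completePseudoMetricType R) (iota : gpt G -> X) (g : X -> R).
Hypothesis Hlen : forall e : edge G, 0 < len e.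
Definition Wt (e : edge G) := (slope iota g e) ^+ 2 * len e.
Hypothesis hfin : (\esum_(e in [set: edge G]) (Wt e)%:E < +oo)%E.
Definition En := fine (\esum_(e in [set: edge G]) (Wt e)%:E).

Lemma Wt_ge0 e : 0 <= Wt e.
Proof. by rewrite /Wt mulr_ge0 ?sqr_ge0 // ltW. Qed.

Lemma En_fin : (\esum_(e in [set: edge G]) (Wt e)%:E) \is a fin_num.
Proof. by rewrite ge0_fin_numE // esum_ge0 // => e _; rewrite lee_fin Wt_ge0. Qed.

Lemma sumW_le (l : seq (edge G)) : uniq l -> \sum_(e <- l) Wt e <= En.
Proof.
move=> Hu; rewrite -lee_fin /En fineK ?En_fin // -sumEFin.
apply: esum_ge; exists [set` l]; first by split; [exact: finite_seq|].
by rewrite -fsbig_seq.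
Qed.

Lemma W_le e : Wt e <= En.
Proof. by have := @sumW_le [:: e] isT; rewrite big_seq1. Qed.

Lemma En_ge0 : 0 <= En.
Proof. by have := @sumW_le [::] isT; rewrite big_nil. Qed.
End EnergyBound.
Section Bound.
Variables (R : realType) (G : mgraph R) (X : completePseudoMetricType R) (iota : gpt G -> X) (g : X -> R).
Hypothesis Hlen : forall e : edge G, 0 < len e.
Hypothesis Hlin : forall e : edge G, exists a b : R, forall t, 0 <= t <= len e ->
           g (iota (epoint e t)) = a * t + b.
Hypothesis hfin : (\esum_(e in [set: edge G]) (Wt iota g e)%:E < +oo)%E.
Variable t : R.
Hypothesis t0 : 0 < t.
Let K := En iota g.
Let gv (w : vert G) := g (iota (inl w)).

Lemma amgm (a s : R) : 0 <= s -> 2 * t * (`|a| * s) <= t ^+ 2 * (a ^+ 2 * s) + s.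
Proof.
move=> s0; have : 0 <= s * (t * `|a| - 1) ^+ 2 by rewrite mulr_ge0 ?sqr_ge0.
rewrite -(real_normK (num_real a)); set y := `|a|.
have -> : s * (t * y - 1) ^+ 2 = t ^+ 2 * (y ^+ 2 * s) + s - 2 * t * (y * s) by ring.
lra.
Qed.

Lemma seg (e : edge G) r : 0 <= r <= len e ->
  2 * t * (`|slope iota g e| * r) <= t ^+ 2 * K + r.
Proof.
case/andP => r0 rl; apply: le_trans (amgm _ r0) _; rewrite lerD2r.
apply: ler_wpM2l; first exact: sqr_ge0.
apply: le_trans (W_le Hlen hfin e); rewrite /Wt.
by apply: ler_wpM2l; first exact: sqr_ge0.
Qed.

Lemma diff_edge (e : edge G) : gv (tgt e) - gv (src e) = slope iota g e * len e.
Proof. by rewrite /slope divfK // gt_eqF. Qed.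

Lemma walk_bound (u v : vert G) l : walk u l v ->
  2 * t * `|gv u - gv v| <= t ^+ 2 * \sum_(x <- l) Wt iota g x.1 + walk_length l.
Proof.
elim: l u => [|[e b] l IH] u /=.
  by move=> ->; rewrite subrr normr0 mulr0 /walk_length !big_nil mulr0 addr0.
have key : forall w, walk w l v -> `|gv u - gv w| = `|slope iota g e| * len e ->
   2 * t * `|gv u - gv v| <= t ^+ 2 * \sum_(x <- (e, b) :: l) Wt iota g x.1 + walk_length ((e, b) :: l).
  move=> w Hw Hd; have := IH _ Hw.
  rewrite big_cons walk_length_cons /= mulrDr.
  have H1 := amgm (slope iota g e) (ltW (Hlen e)).
  have H2 : 2 * t * `|gv u - gv v| <= 2 * t * `|gv u - gv w| + 2 * t * `|gv w - gv v|.
    by rewrite -mulrDr; apply: ler_wpM2l; [apply: mulr_ge0 => //; exact: ltW | exact: ler_distD].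
  rewrite Hd /Wt in H2 *; lra.
case: b key => key [Hs Hw]; apply: (key _ Hw).
  by rewrite -Hs -normrN opprB diff_edge normrM (ger0_norm (ltW (Hlen e))).
by rewrite -Hs diff_edge normrM (ger0_norm (ltW (Hlen e))).
Qed.
Hypothesis Hconn : forall u v : vert G, exists l, walk u l v.

Lemma K_ge0 : 0 <= K.
Proof. exact: (En_ge0 Hlen hfin). Qed.

Lemma vert_bound (u v : vert G) : 2 * t * `|gv u - gv v| <= t ^+ 2 * K + vdist u v.
Proof.
suff : 2 * t * `|gv u - gv v| - t ^+ 2 * K <= vdist u v by lra.
apply: lb_le_inf.
  by have [l Hl] := Hconn u v; exists (walk_length l), l.
move=> r [l Hl <-].
have len_ge0 : forall e : edge G, 0 <= len e by move=> e; exact: ltW.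
have [l' [Hw Hu Hle]] := walk_simple len_ge0 Hl.
have H1 := walk_bound Hw.
have H2 := sumW_le Hlen hfin Hu; rewrite big_map in H2.
have H3 : t ^+ 2 * \sum_(x <- l') Wt iota g x.1 <= t ^+ 2 * K.
  by apply: ler_wpM2l; [exact: sqr_ge0 | exact: H2].
lra.
Qed.

Lemma exits_ne (p : gpt G) : exists x, x \in exits p.
Proof. by case: p => [v|q]; [exists (v, 0) | exists (src (sval q).1, (sval q).2)]; rewrite inE eqxx. Qed.

Lemma inr_val (e : edge G) s (H : 0 < s < len e) :
  g (iota (inr (exist _ (e, s) H))) = slope iota g e * s + gv (src e).
Proof. by rewrite -epointI; apply: (lin Hlen Hlin); case/andP: H => *; rewrite !ltW. Qed.

Lemma exit_bound (p : gpt G) (x : vert G * R) : x \in exits p ->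
  0 <= x.2 /\ 2 * t * `|g (iota p) - gv x.1| <= t ^+ 2 * K + x.2.
Proof.
case: p => [v|[[e s] H]] /=.
  rewrite inE => /eqP -> /=; split => //.
  by rewrite /gv subrr normr0 mulr0 addr0; apply: mulr_ge0; [exact: sqr_ge0|exact: K_ge0].
have [s0 sl] : 0 < s /\ s < len e by case/andP: H.
rewrite !inE => /orP [/eqP -> | /eqP ->] /=; rewrite inr_val.
  split; first exact: ltW.
  rewrite addrK normrM (ger0_norm (ltW s0)); apply: seg.
  by rewrite !ltW.
split; first by rewrite subr_ge0 ltW.
have -> : slope iota g e * s + gv (src e) - gv (tgt e) = slope iota g e * (s - len e).
  by rewrite mulrBr -(diff_edge e); ring.
rewrite normrM (ler0_norm (_ : s - len e <= 0)); last by rewrite subr_le0 ltW.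
rewrite opprB; apply: seg.
by rewrite subr_ge0 ltW //= gerBl ltW.
Qed.

Lemma same_bound (p q : gpt G) r : same_edge_dist p q r ->
  2 * t * `|g (iota p) - g (iota q)| <= t ^+ 2 * K + r.
Proof.
case: p => [v|[[e1 s1] H1]]; case: q => [w|[[e2 s2] H2]] //=.
move=> [E ->]; subst e2.
rewrite !inr_val.
have -> : slope iota g e1 * s1 + gv (src e1) - (slope iota g e1 * s2 + gv (src e1)) =
   slope iota g e1 * (s1 - s2) by ring.
rewrite normrM; apply: seg.
case/andP: H1 => /= a1 b1; case/andP: H2 => /= a2 b2.
by rewrite normr_ge0 /= ler_norml; apply/andP; split; lra.
Qed.

Lemma gdist_bound (p q : gpt G) :
  2 * t * `|g (iota p) - g (iota q)| <= 3 * (t ^+ 2 * K) + gdist p q.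
Proof.
suff : 2 * t * `|g (iota p) - g (iota q)| - 3 * (t ^+ 2 * K) <= gdist p q by lra.
apply: lb_le_inf.
  have [x Hx] := exits_ne p; have [y Hy] := exits_ne q.
  by exists (x.2 + vdist x.1 y.1 + y.2); left; exists x, y.
have tK : 0 <= t ^+ 2 * K by apply: mulr_ge0; [exact: sqr_ge0|exact: K_ge0].
have t2 : 0 <= 2 * t by apply: mulr_ge0 => //; exact: ltW.
move=> r [[x [y [Hx Hy ->]]] | Hr].
  have [x0 Bx] := exit_bound Hx; have [y0 By] := exit_bound Hy.
  have V := vert_bound x.1 y.1.
  have T : 2 * t * `|g (iota p) - g (iota q)| <=
     2 * t * `|g (iota p) - gv x.1| + 2 * t * `|gv x.1 - gv y.1| + 2 * t * `|g (iota q) - gv y.1|.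
    rewrite -!mulrDr; apply: ler_wpM2l => //.
    apply: le_trans (ler_distD (gv x.1) _ _) _; rewrite -addrA lerD2l.
    by apply: le_trans (ler_distD (gv y.1) _ _) _; rewrite (distrC (g (iota q))).
  lra.
have := same_bound Hr; lra.
Qed.
End Bound.
Section Ext.
Variables (R : realType) (X : completePseudoMetricType R) (dX : X -> X -> R) (Tp : Type) (iota : Tp -> X) (g : X -> R).
Hypothesis Hsym : forall x y, dX x y = dX y x.
Hypothesis Htri : forall x y z, dX x z <= dX x y + dX y z.
Hypothesis Hball : forall x (r : R), 0 < r -> ball x r = [set y | dX x y < r].
Hypothesis Hdense : dense (range iota).
Hypothesis Hcont : continuous g.

Lemma approx (x : X) (eta : R) : 0 < eta ->
  exists p, dX x (iota p) < eta /\ `|g x - g (iota p)| < eta.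
Proof.
move=> eta0.
have /cvgrPdist_lt/(_ eta eta0) := @Hcont x.
move/nbhs_ballP => [del del0 Hdel].
have m0 : 0 < Order.min del eta by rewrite lt_min del0 eta0.
have [z [Oz [p _ Ez]]] : (ball x (Order.min del eta))° `&` range iota !=set0.
  apply: Hdense; last exact: open_interior.
  by exists x; exact: nbhsx_ballx.
move: (interior_subset Oz); rewrite -Ez Hball //= lt_min => /andP [H1 H2].
exists p; split => //.
have : ball x del (iota p) by rewrite Hball.
by move/Hdel.
Qed.

Variables (t Cb : R).
Hypothesis t0 : 0 < t.
Hypothesis HB : forall p q, 2 * t * `|g (iota p) - g (iota q)| <= Cb + dX (iota p) (iota q).

Lemma ext_bound x y : 2 * t * `|g x - g y| <= Cb + dX x y.
Proof.
have t1 := t0.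
apply/ler_addgt0Pr => eps eps0.
have k0 : 0 < 4 * t + 2 by lra.
set eta := eps / (4 * t + 2).
have eta0 : 0 < eta by rewrite divr_gt0.
have Heta : eta * (4 * t + 2) = eps by rewrite /eta divfK // gt_eqF.
have [p [dp gp]] := approx x eta0.
have [q [dq gq]] := approx y eta0.
have Hpq := HB p q.
have D1 : dX (iota p) (iota q) <= dX x y + 2 * eta.
  have := Htri (iota p) x (iota q); have := Htri x y (iota q).
  rewrite (Hsym (iota p) x); lra.
have T1 : `|g x - g y| <= `|g x - g (iota p)| + `|g (iota p) - g (iota q)| + `|g y - g (iota q)|.
  apply: le_trans (ler_distD (g (iota p)) _ _) _; rewrite -addrA lerD2l.
  by apply: le_trans (ler_distD (g (iota q)) _ _) _; rewrite (distrC (g y)).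
have t2 : 0 <= 2 * t by lra.
have T2 := ler_wpM2l t2 T1.
rewrite !mulrDr in T2.
have T3 : 2 * t * `|g x - g (iota p)| <= 2 * t * eta by apply: ler_wpM2l => //; exact: ltW.
have T4 : 2 * t * `|g y - g (iota q)| <= 2 * t * eta by apply: ler_wpM2l => //; exact: ltW.
have : 2 * t * eta * 2 + 2 * eta = eps by rewrite -Heta; ring.
lra.
Qed.
End Ext.
Unset Implicit Arguments.

Theorem proposition3p7 (R : realType) (G : mgraph R)
    (X : completePseudoMetricType R) (dX : X -> X -> R) (iota : gpt G -> X) :
  well_formed_mgraph G ->
  is_metric_completion dX iota ->
  compact [set: X] ->
  totally_disconnected (gbdry iota) ->
  (exists x, gbdry iota x /\ limit_point (gbdry iota) x) ->
  exists F : X -> R,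
    {within gbdry iota, continuous F} /\
    forall g : X -> R, mg_harmonic iota g ->
      (forall x, gbdry iota x -> g x = F x) -> ~ in_H1 iota g.
Proof.
move=> [Hpos Hlf Hconn Hdeg] [[Hd0 Hsym Htri] Hball Hiso Hdense] Hcomp Htd [x0 [Bx0 Lx0]].
have dxx : forall x, dX x x = 0 by move=> x; apply/Hd0.
have cd : continuous (fun x => dX x x0).
  move=> x; apply/cvgrPdist_lt => eps eps0.
  apply/nbhs_ballP; exists eps => // z; rewrite Hball //= => Hz.
  have H1 := Htri x z x0; have H2 := Htri z x x0; rewrite (Hsym z x) in H2.
  rewrite ltr_norml; apply/andP; split; lra.
exists (fun x => Num.sqrt (Num.sqrt (dX x x0))).
split.
  apply: continuous_subspaceT => x.
  apply: (continuous_comp (f := fun x => Num.sqrt (dX x x0))); last exact: sqrt_continuous.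
  apply: (continuous_comp (f := fun x => dX x x0)); [exact: cd | exact: sqrt_continuous].
move=> g [gc glin gkir] gF [_ _ [h [hm hd hfin]]].
have E1 : (\esum_(e in [set: edge G])
    (\int[@lebesgue_measure R]_(t in (`[0%R, len e]%classic : set R)) ((h e t) ^+ 2)%:E)
   = \esum_(e in [set: edge G]) (Wt iota g e)%:E)%E.
  by apply: eq_esum => e _; exact: (h_int Hpos glin hm hd e).
have hfin' : (\esum_(e in [set: edge G]) (Wt iota g e)%:E < +oo)%E by rewrite -E1.
set K := En iota g.
have K0 : 0 <= K := En_ge0 Hpos hfin'.
have B : forall t, 0 < t -> forall x y, 2 * t * `|g x - g y| <= 3 * (t ^+ 2 * K) + dX x y.
  move=> t t0 x y.
  apply: (ext_bound Hsym Htri Hball Hdense gc t0) => p q.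
  rewrite Hiso; exact: (gdist_bound Hpos glin hfin' t0 Hconn p q).
set c := (3 * K + 1)^-1.
have K1 : 0 < 3 * K + 1 by lra.
have c0 : 0 < c by rewrite invr_gt0.
have cK : c * (3 * K + 1) = 1 by rewrite mulVf // gt_eqF.
have [y [ny By Uy]] := Lx0 (ball x0 (c ^+ 4)) (nbhsx_ballx x0 _ (exprn_gt0 4 c0)).
move: Uy; rewrite Hball ?exprn_gt0 //= Hsym => dy.
set d := dX y x0 in dy.
have d0 : 0 < d.
  rewrite lt_neqAle eq_sym; apply/andP; split.
    by apply/eqP => /Hd0 E; rewrite E eqxx in ny.
  have := Htri y x0 y; rewrite dxx (Hsym x0 y) -/d; lra.
set s := Num.sqrt d; set q := Num.sqrt s.
have s0 : 0 < s by rewrite sqrtr_gt0.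
have q0 : 0 < q by rewrite sqrtr_gt0.
have ds : d = s ^+ 2 by rewrite sqr_sqrtr // ltW.
have sq : s = q ^+ 2 by rewrite sqr_sqrtr // ltW.
have gy : g y = q by rewrite gF.
have gx0 : g x0 = 0 by rewrite gF // dxx !sqrtr0.
have hq : q < c.
  rewrite -(ltr_pXn2r (n := 4)) // ?nnegrE ?ltW //.
  have -> : q ^+ 4 = d by rewrite ds sq -exprM.
  exact: dy.
have := B s s0 y x0; rewrite gy gx0 subr0 (gtr0_norm q0) -/d ds sq.
move=> H.
have H2 : q ^+ 3 * 2 <= q ^+ 3 * (q * (3 * K + 1)).
  have -> : q ^+ 3 * 2 = 2 * q ^+ 2 * q by rewrite mulrC -mulrA -exprSr.
  have -> : q ^+ 3 * (q * (3 * K + 1)) = 3 * ((q ^+ 2) ^+ 2 * K) + (q ^+ 2) ^+ 2 by ring.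
  exact: H.
rewrite ler_pM2l ?exprn_gt0 // in H2.
have H3 : q * (3 * K + 1) < c * (3 * K + 1) by rewrite ltr_pM2r.
clear -H2 H3 cK; lra.
Qed.
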